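(* Let $p=f+\varepsilon g\in\mathbb{D}[t]$ ($f,g\in\mathbb{R}[t]$) be monic, and write $f=\prod_{i=1}^m N_i^{n_i}$ where $N_1,\dots,N_m\in\mathbb{R}[t]$ are pairwise coprime irreducible monic polynomials and $n_1,\dots,n_m$ are positive integers. Then $p$ can be written as a product of monic polynomials in $\mathbb{D}[t]$ each of whose primal parts is irreducible over $\mathbb{R}$ if and only if $\prod_{i=1}^m N_i^{n_i-1}$ divides $g$ in $\mathbb{R}[t]$.
   Context: $\mathbb{D}=\mathbb{R}[\varepsilon]/\langle\varepsilon^2\rangle$ denotes the dual numbers; every element of $\mathbb{D}[t]$ is uniquely $f+\varepsilon g$ with $f,g\in\mathbb{R}[t]$, where $f$ is called the primal part. A polynomial in $\mathbb{D}[t]$ is monic if its leading coefficient is $1$ (so $p=f+\varepsilon g$ monic means $f$ monic and $\deg g<\deg f$). *)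

(* Defs.v *)
From HB Require Import structures.
From mathcomp Require Import all_boot all_order all_algebra.
From mathcomp Require Export reals.
Set Implicit Arguments. Unset Strict Implicit. Unset Printing Implicit Defensive.
Import Order.TTheory GRing.Theory Num.Theory.
Local Open Scope ring_scope.

(* Polynomials over the dual numbers D = R[eps]/(eps^2), with coefficients in R.
   Every element of D[t] is uniquely f + eps g with f g in R[t]; we represent it
   by the pair (f, g) (primal part, dual part). *)
Definition dpoly (R : nzRingType) := ({poly R} * {poly R})%type.

Definition primal {R : nzRingType} (p : dpoly R) : {poly R} := p.1.
Definition dualpart {R : nzRingType} (p : dpoly R) : {poly R} := p.2.

(* (f1 + eps g1)(f2 + eps g2) = f1 f2 + eps (f1 g2 + g1 f2) *)
Definition dmul {R : comNzRingType} (p q : dpoly R) : dpoly R :=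
  (p.1 * q.1, p.1 * q.2 + p.2 * q.1).

Definition done_ {R : comNzRingType} : dpoly R := (1, 0).

Definition dprod {R : comNzRingType} (s : seq (dpoly R)) : dpoly R :=
  foldr dmul done_ s.

(* f + eps g is monic (leading coefficient 1) iff f is monic and deg g < deg f *)
Definition dmonic {R : comNzRingType} (p : dpoly R) : Prop :=
  p.1 \is monic /\ (size p.2 < size p.1)%N.

(* Main.v *)
Require Import Defs.
From mathcomp Require Import all_boot all_order all_algebra.
From mathcomp Require Import reals.
From mathcomp Require Import ring zify.
Import Order.TTheory GRing.Theory Num.Theory.
Local Open Scope ring_scope.

Section Aux.
Variable F : fieldType.
Implicit Types (p q : dpoly F) (s : seq (dpoly F)).

Lemma dmulA p1 p2 p3 : dmul p1 (dmul p2 p3) = dmul (dmul p1 p2) p3.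
Proof. case: p1 p2 p3 => [a b] [c d] [e f]; rewrite /dmul /=; congr pair; ring. Qed.

Lemma dmul1 p : dmul done_ p = p.
Proof. case: p => a b; rewrite /dmul /done_ /=; congr pair; ring. Qed.

Lemma dprod_cat s1 s2 : dprod (s1 ++ s2) = dmul (dprod s1) (dprod s2).
Proof.
elim: s1 => [|q s1 IH] /=; first by rewrite dmul1.
by rewrite IH dmulA.
Qed.

Lemma dprod_nseq k (a : {poly F}) : dprod (nseq k (a, 0)) = (a ^+ k, 0).
Proof.
elim: k => [|k IH] /=; first by [].
rewrite IH /dmul /=; congr pair; rewrite ?exprS; ring.
Qed.

Lemma mem_dvd s q : q \in s -> q.1 %| (dprod s).1.
Proof.
elim: s => [|q' s IH] //=; rewrite in_cons => /orP [/eqP->|/IH H] /=.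
  exact: dvdp_mulIl.
exact: dvdp_mull.
Qed.

Lemma fwd_aux s : forall e d : {poly F},
  (forall q, q \in s -> q.1 != 0) ->
  (forall q, q \in s -> d * q.1 %| e * (dprod s).1) ->
  d %| e * (dprod s).2.
Proof.
elim: s => [|q s IH] e d Hnz Hd /=; first by rewrite mulr0 dvdp0.
rewrite mulrDr; apply: dvdp_add.
  rewrite mulrA; apply: IH => [q' Hq'|q' Hq'].
    by apply: Hnz; rewrite in_cons Hq' orbT.
  by rewrite -mulrA; apply: Hd; rewrite in_cons Hq' orbT.
have H1 := Hd q (mem_head _ _); rewrite /= in H1.
have H2 : d %| e * (dprod s).1.
  rewrite -(@dvdp_mul2r _ q.1) ?Hnz ?mem_head //.
  by rewrite (_ : e * (dprod s).1 * q.1 = e * (q.1 * (dprod s).1)) //; ring.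
rewrite (_ : e * (q.2 * (dprod s).1) = q.2 * (e * (dprod s).1)); last by ring.
exact: dvdp_mull.
Qed.

End Aux.

Theorem lemma4 (R : realType) (f g : {poly R}) (m : nat)
    (N : 'I_m -> {poly R}) (n : 'I_m -> nat) :
  dmonic (f, g) ->
  (forall i, N i \is monic) ->
  (forall i, irreducible_poly (N i)) ->
  (forall i j, i != j -> coprimep (N i) (N j)) ->
  (forall i, (0 < n i)%N) ->
  f = \prod_(i < m) N i ^+ n i ->
  ((exists s : seq (dpoly R),
      (forall q, q \in s -> dmonic q /\ irreducible_poly (primal q))
      /\ dprod s = (f, g))
   <-> (\prod_(i < m) N i ^+ (n i).-1 %| g)).
Proof.
move=> [fmon gsz] Nmon Nirr Ncop npos Hf.
have split_prod : forall P : pred 'I_m,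
    \prod_(i | P i) N i ^+ n i = \prod_(i | P i) N i ^+ (n i).-1 * \prod_(i | P i) N i.
  move=> P; rewrite -big_split; apply: eq_bigr => i _.
  by rewrite -{1}(prednK (npos i)) exprSr.
have split_all : \prod_(i < m) N i ^+ n i = \prod_(i < m) N i ^+ (n i).-1 * \prod_(i < m) N i.
  rewrite -big_split; apply: eq_bigr => i _.
  by rewrite -{1}(prednK (npos i)) exprSr.
have Dnz : \prod_(i < m) N i ^+ (n i).-1 != 0.
  by apply: monic_neq0; apply: monic_prod => i _; apply: monic_exp.
have radmon : forall P : pred 'I_m, \prod_(i | P i) N i \is monic.
  by move=> P; apply: monic_prod.
split.
- move=> [s [Hs Hp]].
  have Hfs : (dprod s).1 = f by rewrite Hp.
  have Hgs : (dprod s).2 = g by rewrite Hp.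
  rewrite -Hgs -[(dprod s).2]mul1r; apply: fwd_aux.
    by move=> q /Hs [[/monic_neq0 ? _] _].
  move=> q Hq; rewrite mul1r Hfs.
  have [[amon _] airr] := Hs q Hq; rewrite /primal in airr.
  have adv : q.1 %| f by rewrite -Hfs; apply: mem_dvd.
  have [i Hi] : exists i, q.1 %| N i.
    case: (boolP [exists i, q.1 %| N i]) => [/existsP //|/existsP Hn].
    exfalso.
    have Hc : coprimep q.1 f.
      rewrite Hf; apply: (big_ind (coprimep q.1)).
      - exact: coprimep1.
      - by move=> x y Hx Hy; rewrite coprimepMr Hx Hy.
      move=> i _; apply: coprimep_expr; rewrite irreducible_poly_coprime //.
      by apply/negP => H; apply: Hn; exists i.
    have : coprimep q.1 q.1.
      by rewrite coprimep_sym in Hc; rewrite (coprimep_dvdr adv Hc).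
    rewrite coprimepp => /eqP Hs1.
    by case: airr; rewrite Hs1.
  rewrite Hf (split_prod xpredT); apply: dvdp_mul => //.
  apply: (dvdp_trans Hi); rewrite (bigD1 i) //=; exact: dvdp_mulIl.
- move=> /dvdpP [h Hg].
  have rev_aux : forall k (S : {set 'I_m}), #|S| = k -> forall h : {poly R},
      (size h < size (\prod_(i in S) N i)%R)%N ->
      exists s : seq (dpoly R),
        (forall q, q \in s -> dmonic q /\ irreducible_poly (primal q))
        /\ dprod s = (\prod_(i in S) N i ^+ n i,
                      h * \prod_(i in S) N i ^+ (n i).-1).
    elim=> [|k IH] S HS h0 Hh0.
      move: Hh0; move/cards0_eq: HS => ->; rewrite !big_set0 size_poly1.
      rewrite ltnS leqn0 size_poly_eq0 => /eqP ->.
      by exists [::]; split => //; rewrite mul0r.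
    have [i Hi] : exists i, i \in S.
      by apply/set0Pn; rewrite -card_gt0 HS.
    have HS' : #|S :\ i| = k by move: HS; rewrite (cardsD1 i) Hi => -[].
    set S' := S :\ i.
    move: Hh0; rewrite !(big_setD1 i Hi) /= -/S' => Hh0.
    set rad' := \prod_(j in S') N j.
    have Ninz : N i != 0 by apply: monic_neq0.
    have radnz : rad' != 0 by apply: monic_neq0; apply: radmon.
    have Hcop : coprimep (N i) rad'.
      apply: (big_ind (coprimep (N i))).
      - exact: coprimep1.
      - by move=> x y Hx Hy; rewrite coprimepMr Hx Hy.
      by move=> j; rewrite in_setD1 => /andP [Hj _]; apply: Ncop; rewrite eq_sym.
    have [h' [c [Hh Hc]]] : exists h' c, h0 = h' * N i + c * rad' /\
                                         (size c < size (N i))%N.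
      move/Bezout_eq1_coprimepP: Hcop => [[u v] /= Huv].
      exists (h0 * u + (h0 * v) %/ N i * rad'), ((h0 * v) %% N i).
      split; last by rewrite ltn_modp.
      have E := divp_eq (h0 * v) (N i).
      rewrite -[h0 in LHS]mulr1 -Huv.
      rewrite (_ : h0 * (u * N i + v * rad') = h0 * u * N i + (h0 * v) * rad');
        last by ring.
      rewrite [in LHS]E; ring.
    have szNi : (0 < size (N i))%N by rewrite size_poly_gt0.
    have szrad : (0 < size rad')%N by rewrite size_poly_gt0.
    have Hh' : (size h' < size rad')%N.
      case: (eqVneq h' 0) => [->|h'nz]; first by rewrite size_poly0.
      have E1 : h' * N i = h0 - c * rad' by rewrite Hh; ring.
      have := size_mul h'nz Ninz; rewrite E1 => E2.
      have E3 := size_polyD h0 (- (c * rad')); rewrite size_polyN in E3.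
      have E4 := size_polyMleq c rad'.
      have E5 := size_mul Ninz radnz.
      rewrite E5 in Hh0.
      have : (size (h0 - c * rad')%R < (size (N i) + size rad').-1)%N.
        apply: (leq_ltn_trans E3); rewrite gtn_max Hh0 /=.
        apply: (leq_ltn_trans E4); move: Hc szrad; case: (size rad') => // r; rewrite !addnS /=; lia.
      rewrite E2; move: szNi; case: (size (N i)) => // r; rewrite addnS addSn /=. by move=> _; rewrite addnC ltn_add2l.
    have [s' [Hs' Hps']] := IH S' HS' h' Hh'.
    set e := (n i).-1.
    have Hne : n i = e.+1 by rewrite prednK.
    exists (((N i, c) :: nseq e (N i, 0)) ++ s'); split.
      move=> q; rewrite mem_cat in_cons mem_nseq => /orP [/orP [/eqP ->|/andP [_ /eqP ->]] |/Hs'] //.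
        by split; [split; [exact: Nmon|exact: Hc]|exact: Nirr].
      by split; [split; [exact: Nmon|rewrite /= size_poly0]|exact: Nirr].
    rewrite dprod_cat Hps' /= dprod_nseq /dmul /= Hne.
    have HF' := split_prod (fun j => j \in S').
    rewrite HF' Hh -/rad' exprS; congr pair; ring.
  have setTE : forall G : 'I_m -> {poly R}, \prod_(i in [set: 'I_m]) G i = \prod_(i < m) G i.
    by move=> G; apply: eq_bigl => i; rewrite in_setT.
  have Hsz : (size h < size (\prod_(i in [set: 'I_m]) N i)%R)%N.
    have Hrad := radmon xpredT.
    rewrite setTE.
    case: (eqVneq h 0) => [->|hnz]; first by rewrite size_poly0 size_poly_gt0 monic_neq0.
    have Hrad' : \prod_(i < m) N i \is monic by apply: monic_prod.
    move: gsz; rewrite /= Hf Hg split_all !size_mul //; last exact: monic_neq0.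
    have := size_poly_gt0 (\prod_(i < m) N i ^+ (n i).-1); rewrite Dnz.
    case: (size (\prod_(i < m) N i ^+ (n i).-1)) => // r _.
    by rewrite !addnS addSn /= addnC ltn_add2l.
  have [s [Hs Hps]] := rev_aux _ [set: 'I_m] erefl h Hsz.
  exists s; split => //.
  move: Hps; rewrite Hf Hg.
  by rewrite !setTE.
Qed.
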